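(* Suppose $f$ is twice differentiable at every point of $\mathbb{R}^{n\times p}$. Then for every $X\in\mathcal{S}_{n,p}$ and every $D\in\mathcal{T}_X$, $$\langle D,\nabla^2h(X)[D]\rangle=\langle D,\nabla^2f(X)[D]-D\Phi(X^\top\nabla f(X))\rangle .$$
   Context: $f:\mathbb{R}^{n\times p}\to\mathbb{R}$ is differentiable with $f,\nabla f$ locally Lipschitz. $\langle A,B\rangle=\mathrm{tr}(A^\top B)$, $\Phi(M):=\frac12(M+M^\top)$. $\mathcal{S}_{n,p}=\{X:X^\top X=I_p\}$, and for $X\in\mathcal{S}_{n,p}$ the tangent space is $\mathcal{T}_X:=\{D\in\mathbb{R}^{n\times p}:\Phi(D^\top X)=0\}$. $\mathcal{A}(X):=\frac32I_p-\frac12X^\top X$, $h(X):=f(X\mathcal{A}(X))+\frac\beta4\|X^\top X-I_p\|_F^2$ with $\beta>0$. *)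

(* Defs.v *)
From HB Require Import structures.
From mathcomp Require Import all_boot all_order all_algebra.
From mathcomp Require Import all_classical all_reals all_analysis.
Set Implicit Arguments. Unset Strict Implicit. Unset Printing Implicit Defensive.
Import Order.TTheory GRing.Theory Num.Theory.
Import numFieldNormedType.Exports.
Local Open Scope ring_scope.

Section Defs.
Variables (R : realType) (n p : nat).
Notation M := 'M[R]_(n, p).

Definition inner (A B : M) : R := \tr (A^T *m B).
Definition frob (A : M) : R := Num.sqrt (inner A A).
Definition sym (A : 'M[R]_p) : 'M[R]_p := 2^-1 *: (A + A^T).
Definition stiefel (X : M) : Prop := X^T *m X = 1%:M.
Definition tangent (X D : M) : Prop := sym (D^T *m X) = 0.
Definition Amap (X : M) : 'M[R]_p := (3 / 2) *: 1%:M - 2^-1 *: (X^T *m X).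
Definition hfun (f : M -> R) (beta : R) (X : M) : R :=
  f (X *m Amap X) + beta / 4 * (\tr ((X^T *m X - 1%:M)^T *m (X^T *m X - 1%:M))).
(* Euclidean gradient w.r.t. the Frobenius inner product: entry (i,j) is the
   partial derivative in direction of the elementary matrix E_ij *)
Definition grad (f : M -> R) (X : M) : M :=
  \matrix_(i, j) ('D_(delta_mx i j) f X).
Definition hess (f : M -> R) (X D : M) : M := 'd (grad f) X D.
Definition loc_lipschitz (V : normedModType R) (g : M -> V) : Prop :=
  forall X : M, exists r : R, exists L : R, 0 < r /\
    forall Y Z : M, frob (Y - X) < r -> frob (Z - X) < r ->
      `|g Y - g Z| <= L * frob (Y - Z).
End Defs.

(* Main.v *)
Require Import Defs.
From HB Require Import structures.
From mathcomp Require Import all_boot all_order all_algebra.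
From mathcomp Require Import all_classical all_reals all_analysis.
From mathcomp Require Import lra.
Import Order.TTheory GRing.Theory Num.Theory.
Import numFieldNormedType.Exports.
Local Open Scope ring_scope.
Set Implicit Arguments. Unset Strict Implicit. Unset Printing Implicit Defensive.

Section Tool.
Variable R : realType.
Variable V : normedModType R.

Definition coordL m n (i : 'I_m) (j : 'I_n) : {linear 'M[R]_(m,n) -> R}.
by exists (fun N : 'M[R]_(_, _) => N i j); do 2![eexists]; do ?[constructor];
     rewrite ?mxE// => ? *; rewrite ?mxE//; move=> ?; rewrite !mxE.
Defined.

Lemma coordLE m n i j (N : 'M[R]_(m,n)) : coordL i j N = N i j.
Proof. by []. Qed.

Lemma diff_entry m n (F : V -> 'M[R]_(m,n)) x v i j :
  differentiable F x -> 'd F x v i j = 'd (fun y => F y i j) x v.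
Proof.
move=> dF.
have -> : (fun y => F y i j) = coordL i j \o F by [].
rewrite (diff_comp (g:=coordL i j)) //; last first.
  by apply: linear_differentiable; apply: coord_continuous.
have -> := @diff_lin _ _ _ (coordL i j) (F x) (@coord_continuous _ _ _ i j).
by [].
Qed.

Lemma differentiable_entry m n (F : V -> 'M[R]_(m,n)) x i j :
  differentiable F x -> differentiable (fun y => F y i j) x.
Proof.
move=> dF; have -> : (fun y => F y i j) = coordL i j \o F by [].
apply: differentiable_comp => //; apply: linear_differentiable; apply: coord_continuous.
Qed.


Lemma is_diff_sumf (W : normedModType R) n (F dF : 'I_n -> V -> W) x :
  (forall k, is_diff x (F k) (dF k)) ->
  is_diff x (fun y => \sum_(k < n) F k y) (fun v => \sum_(k < n) dF k v).
Proof.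
elim: n F dF => [|n IH] F dF H.
  have -> : (fun y : V => \sum_(k < 0) F k y) = cst 0.
    by apply/funext => y; rewrite big_ord0.
  have -> : (fun y : V => \sum_(k < 0) dF k y) = 0.
    by apply/funext => y; rewrite big_ord0.
  exact: is_diff_cst.
have -> : (fun y => \sum_(k < n.+1) F k y) =
   (fun y => \sum_(k < n) F (widen_ord (leqnSn n) k) y) + F ord_max.
  by apply/funext => y; rewrite big_ord_recr.
have H1 := IH (fun k => F (widen_ord (leqnSn n) k)) (fun k => dF (widen_ord (leqnSn n) k)) (fun k => H _).
have H2 := is_diffD H1 (H ord_max). apply: (is_diff_eq H2).
by apply/funext => v; rewrite /= big_ord_recr.
Qed.

Lemma is_diff_mx m n (F dF : V -> 'M[R]_(m,n)) x :
  (forall i j, is_diff x (fun y => F y i j) (fun v => dF v i j)) ->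
  is_diff x F dF.
Proof.
move=> H.
have dF' : differentiable F x.
  have -> : F = (fun y => \sum_(i < m) \sum_(j < n) F y i j *: delta_mx i j).
    by apply/funext => y; rewrite {1}(matrix_sum_delta (F y)).
  have K : forall i j, is_diff x (fun y => F y i j *: delta_mx i j)
      (fun v => 'd (fun y => F y i j) x v *: delta_mx i j).
    move=> i j; apply: DiffDef; first by apply: differentiableZl; exact: ex_diff.
    by rewrite diffZl //; exact: ex_diff.
  have K2 : forall i, is_diff x (fun y => \sum_(j < n) F y i j *: delta_mx i j)
      (fun v => \sum_(j < n) 'd (fun y => F y i j) x v *: delta_mx i j).
    move=> i; exact: (@is_diff_sumf _ n (fun j y => F y i j *: delta_mx i j)).
  by case: (@is_diff_sumf _ m (fun i y => \sum_(j < n) F y i j *: delta_mx i j) _ _ K2).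
apply: DiffDef => //; apply/funext => v; apply/matrixP => i j.
by rewrite diff_entry // diff_val.
Qed.

Lemma is_diff_entry m n (F dF : V -> 'M[R]_(m,n)) x i j :
  is_diff x F dF -> is_diff x (fun y => F y i j) (fun v => dF v i j).
Proof.
move=> H; apply: DiffDef; first by apply: differentiable_entry; exact: ex_diff.
by apply/funext => v; rewrite -diff_entry ?diff_val //; exact: ex_diff.
Qed.

Lemma is_diff_mulmx a b c (A dA : V -> 'M[R]_(a,b)) (B dB : V -> 'M[R]_(b,c)) x :
  is_diff x A dA -> is_diff x B dB ->
  is_diff x (fun y => A y *m B y) (fun v => dA v *m B x + A x *m dB v).
Proof.
move=> HA HB; apply: is_diff_mx => i j.
have -> : (fun y => (A y *m B y) i j) = (fun y => \sum_(k < b) ((fun y => A y i k) * (fun y => B y k j)) y).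
  by apply/funext => y; rewrite mxE.
apply: is_diff_eq.
  apply: (@is_diff_sumf _ b (fun k => (fun y => A y i k) * (fun y => B y k j))) => k.
  apply: is_diffM; exact: is_diff_entry.
apply/funext => v /=; rewrite !mxE !(mxE, big_split) /= addrC.
by congr (_ + _); apply: eq_bigr => k _ /=; rewrite mulrC.
Qed.

Lemma is_diff_trmx m n (A dA : V -> 'M[R]_(m,n)) x :
  is_diff x A dA -> is_diff x (fun y => (A y)^T) (fun v => (dA v)^T).
Proof.
move=> HA; apply: is_diff_mx => i j.
have -> : (fun y => (A y)^T i j) = (fun y => A y j i) by apply/funext => y; rewrite mxE.
have -> : (fun v => (dA v)^T i j) = (fun v => dA v j i) by apply/funext => y; rewrite mxE.
exact: is_diff_entry.
Qed.

Lemma is_diffD' (W : normedModType R) (A dA B dB : V -> W) x :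
  is_diff x A dA -> is_diff x B dB ->
  is_diff x (fun y => A y + B y) (fun v => dA v + dB v).
Proof. move=> HA HB; exact: is_diffD. Qed.

Lemma is_diffN' (W : normedModType R) (A dA : V -> W) x :
  is_diff x A dA -> is_diff x (fun y => - A y) (fun v => - dA v).
Proof. move=> HA; exact: is_diffN. Qed.

Lemma is_diffB' (W : normedModType R) (A dA B dB : V -> W) x :
  is_diff x A dA -> is_diff x B dB ->
  is_diff x (fun y => A y - B y) (fun v => dA v - dB v).
Proof. move=> HA HB; exact: is_diffB. Qed.

Lemma is_diffZ' (W : normedModType R) (k : R) (A dA : V -> W) x :
  is_diff x A dA -> is_diff x (fun y => k *: A y) (fun v => k *: dA v).
Proof. move=> HA; exact: is_diffZ. Qed.

Lemma is_diff_cst' (W : normedModType R) (C : W) x :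
  is_diff x (fun _ : V => C) (fun _ => 0).
Proof. exact: is_diff_cst. Qed.

Lemma is_diff_id' x : is_diff x (fun y : V => y) (fun v => v).
Proof. exact: is_diff_id. Qed.

Lemma is_diffM' (A dA B dB : V -> R) x :
  is_diff x A dA -> is_diff x B dB ->
  is_diff x (fun y => A y * B y) (fun v => dA v * B x + A x * dB v).
Proof.
move=> HA HB; apply: (is_diff_eq (is_diffM HA HB)).
by apply/funext => v /=; rewrite addrC [_ * B x]mulrC.
Qed.

Lemma is_diff_tr m (A dA : V -> 'M[R]_m) x :
  is_diff x A dA -> is_diff x (fun y => \tr (A y)) (fun v => \tr (dA v)).
Proof.
move=> HA; rewrite /mxtrace.
exact: (@is_diff_sumf _ m (fun i y => A y i i) (fun i v => dA v i i)
  _ (fun i => is_diff_entry i i HA)).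
Qed.
End Tool.

Lemma diff_inner (R : realType) n p (f : 'M[R]_(n,p) -> R) Z W :
  differentiable f Z -> 'd f Z W = inner (grad f Z) W.
Proof.
move=> df.
rewrite {1}(matrix_sum_delta W) linear_sum.
under eq_bigr do rewrite linear_sum.
rewrite /inner /mxtrace exchange_big /=; apply: eq_bigr => i _.
rewrite mxE; apply: eq_bigr => j _.
rewrite !mxE linearZ /= -deriveE // mulrC.
by [].
Qed.

Lemma lin_expand (R : realType) n p (L : {linear 'M[R]_(n,p) -> R}) D :
  L D = \sum_(k < p) \sum_(l < n) D l k * L (delta_mx l k).
Proof.
rewrite {1}(matrix_sum_delta D) linear_sum exchange_big /=.
apply: eq_bigr => k _; rewrite linear_sum; apply: eq_bigr => l _.
by rewrite linearZ.
Qed.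

Lemma inner_expand (R : realType) n p (D K : 'M[R]_(n,p)) :
  inner D K = \sum_(k < p) \sum_(l < n) D l k * K l k.
Proof.
rewrite /inner /mxtrace; apply: eq_bigr => k _; rewrite mxE.
by apply: eq_bigr => l _; rewrite mxE.
Qed.

Theorem mainTheorem10 (R : realType) (n p : nat) (f : 'M[R]_(n, p) -> R) (beta : R) :
  0 < beta ->
  (forall X, differentiable f X) ->
  loc_lipschitz f -> loc_lipschitz (grad f) ->
  (forall X, differentiable (grad f) X) ->
  forall X D : 'M[R]_(n, p), stiefel X -> tangent X D ->
    inner D (hess (hfun f beta) X D) =
    inner D (hess f X D - D *m sym (X^T *m grad f X)).
Proof.
move=> bpos df _ _ dG X D HX HD.
set G := grad f.
set h := hfun f beta.
pose dAm (Y v : 'M[R]_(n,p)) : 'M[R]_p := - (2^-1 *: (v^T *m Y + Y^T *m v)).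
have dA : forall Y : 'M[R]_(n,p), is_diff Y (fun Y => Amap Y) (dAm Y).
  move=> Y; apply: is_diff_eq.
    exact: (is_diffB' (is_diff_cst' _ _) (is_diffZ' _ (is_diff_mulmx (is_diff_trmx (is_diff_id' _)) (is_diff_id' _)))).
  by apply/funext => v; rewrite /dAm sub0r.
pose g (Y : 'M[R]_(n,p)) := Y *m Amap Y.
pose Dg (Y v : 'M[R]_(n,p)) := v *m Amap Y + Y *m dAm Y v.
have dg : forall Y, is_diff Y g (Dg Y).
  by move=> Y; exact: (is_diff_mulmx (is_diff_id' _) (dA Y)).
pose P (Y : 'M[R]_(n,p)) : 'M[R]_p := Y^T *m Y - 1%:M.
pose dP (Y v : 'M[R]_(n,p)) : 'M[R]_p := v^T *m Y + Y^T *m v.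
have dPd : forall Y, is_diff Y P (dP Y).
  move=> Y; apply: is_diff_eq.
    exact: (is_diffB' (is_diff_mulmx (is_diff_trmx (is_diff_id' _)) (is_diff_id' _)) (is_diff_cst' _ _)).
  by apply/funext => v; rewrite /dP subr0.
pose pen (Y : 'M[R]_(n,p)) := \tr ((P Y)^T *m P Y).
pose dpen (Y v : 'M[R]_(n,p)) := \tr ((dP Y v)^T *m P Y + (P Y)^T *m dP Y v).
have dpend : forall Y, is_diff Y pen (dpen Y).
  by move=> Y; exact: (is_diff_tr (is_diff_mulmx (is_diff_trmx (dPd Y)) (dPd Y))).
pose c := beta / 4.
have dh : forall Y, is_diff Y h (fun v => 'd f (g Y) (Dg Y v) + c * dpen Y v).
  move=> Y.
  exact: (is_diffD' (is_diff_comp (dg Y) (differentiableP (df (g Y)))) (is_diffZ' c (dpend Y))).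
have qE : forall E Y, 'd h Y E = inner (G (g Y)) (Dg Y E) + c * dpen Y E.
  by move=> E Y; rewrite diff_val -diff_inner.
have Gg := is_diff_comp (dg X) (differentiableP (dG (g X))).
pose HQ (E : 'M[R]_(n,p)) :=
  let dAmE := is_diffN' (is_diffZ' 2^-1 (is_diffD' (is_diff_mulmx (is_diff_cst' E^T X) (is_diff_id' X)) (is_diff_mulmx (is_diff_trmx (is_diff_id' X)) (is_diff_cst' E X)))) in
  let DgE := is_diffD' (is_diff_mulmx (is_diff_cst' E X) (dA X)) (is_diff_mulmx (is_diff_id' X) dAmE) in
  let dPE := is_diffD' (is_diff_mulmx (is_diff_cst' E^T X) (is_diff_id' X)) (is_diff_mulmx (is_diff_trmx (is_diff_id' X)) (is_diff_cst' E X)) in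
  is_diffD' (is_diff_tr (is_diff_mulmx (is_diff_trmx Gg) DgE))
    (is_diffZ' c (is_diff_tr (is_diffD' (is_diff_mulmx (is_diff_trmx dPE) (dPd X)) (is_diff_mulmx (is_diff_trmx (dPd X)) dPE)))).
have HQt : forall E, differentiable (fun Y => inner (G (g Y)) (Dg Y E) + c * dpen Y E) X.
  by move=> E; case: (HQ E).
pose qf (E Y : 'M[R]_(n,p)) := inner (G (g Y)) (Dg Y E) + c * dpen Y E.
have gradhE : grad h = fun Y => \matrix_(i,j) qf (delta_mx i j) Y.
  apply/funext => Y; apply/matrixP => i j; rewrite !mxE deriveE; last first.
    by case: (dh Y).
  by rewrite qE.
have Hgh : is_diff X (grad h) (fun v => \matrix_(i,j) 'd (qf (delta_mx i j)) X v).
  rewrite gradhE; apply: is_diff_mx => i j.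
  have -> : (fun y => (\matrix_(i0,j0) qf (delta_mx i0 j0) y) i j) = qf (delta_mx i j).
    by apply/funext => y; rewrite mxE.
  have -> : (fun v => (\matrix_(i0,j0) 'd (qf (delta_mx i0 j0)) X v) i j) = 'd (qf (delta_mx i j)) X.
    by apply/funext => y; rewrite mxE.
  exact: differentiableP (HQt _).
have LHS1 : inner D (hess h X D) = \sum_(k < p) \sum_(l < n) D l k * 'd (qf (delta_mx l k)) X D.
  have [_ Hv] := Hgh; rewrite /hess Hv inner_expand; apply: eq_bigr => k _; apply: eq_bigr => l _.
  by rewrite mxE.
have qfD : qf D = fun Y => \sum_(k < p) \sum_(l < n) D l k * qf (delta_mx l k) Y.
  apply/funext => Y; rewrite /qf -qE lin_expand; apply: eq_bigr => k _; apply: eq_bigr => l _.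
  by rewrite qE.
have LHS2 : inner D (hess h X D) = 'd (qf D) X D.
  have K : is_diff X (fun Y => \sum_(k < p) \sum_(l < n) D l k * qf (delta_mx l k) Y)
     (fun v => \sum_(k < p) \sum_(l < n) D l k *: 'd (qf (delta_mx l k)) X v).
    apply: (@is_diff_sumf _ _ _ p (fun k Y => \sum_(l < n) D l k * qf (delta_mx l k) Y)) => k.
    apply: (@is_diff_sumf _ _ _ n (fun l Y => D l k * qf (delta_mx l k) Y)) => l.
    exact: (is_diffZ' (D l k) (differentiableP (HQt _))).
  have [_ Kv] := K; by rewrite LHS1 qfD Kv.
rewrite LHS2.
have HQD : is_diff X (qf D) _ := HQ D.
have [_ ->] := HQD.
rewrite /=.
have S0 : D^T *m X + X^T *m D = 0.
  move: HD; rewrite /tangent /sym trmx_mul trmxK => /eqP.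
  by rewrite scaler_eq0 invr_eq0 pnatr_eq0 /= => /eqP.
have AX : Amap X = 1%:M.
  rewrite /Amap HX -scalerBl.
  have -> : (3 / 2 - 2^-1 : R) = 1.
    by lra.
  by rewrite scale1r.
have gX : g X = X by rewrite /g AX mulmx1.
have PX : P X = 0 by rewrite /P HX subrr.
have dAmX : dAm X D = 0 by rewrite /dAm S0 scaler0 oppr0.
have DgX : Dg X D = D by rewrite /Dg dAmX AX mulmx1 mulmx0 addr0.
rewrite /dP DgX gX AX PX S0 !(mul0mx, mulmx0, trmx0, add0r, addr0, scaler0, oppr0, mxtrace0, dAmX).
rewrite mulmx1 /inner /hess /sym -/G.
rewrite !(mulmxN, mulmxBr, mulmxDr, scalemxAr, mulmxA, mxtraceD, linearN, linearB, mxtraceZ, trmx_mul, trmxK) /=.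
rewrite -!scalemxAr !(mxtraceZ, mulmxDr, mxtraceD, mulmxA).
have E1 : \tr (('d G X D)^T *m D) = \tr (D^T *m 'd G X D).
  by rewrite -mxtrace_tr trmx_mul trmxK.
have E2 : \tr (D^T *m D *m X^T *m G X) = \tr ((G X)^T *m X *m D^T *m D).
  by rewrite -mxtrace_tr !trmx_mul !trmxK !mulmxA.
have E3 : \tr (D^T *m D *m (G X)^T *m X) = \tr ((G X)^T *m X *m D^T *m D).
  by rewrite -mulmxA mxtrace_mulC !mulmxA.
by rewrite E1 E2 E3.
Qed.
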